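(* Let $\alpha$ be a countably infinite order type with $\alpha=\omega\alpha'+n$, $n<\omega$. Let $S_\alpha:=\Omega(\alpha')\oplus n$ and $Q_\alpha:=I_{<\omega}(S_\alpha)$. Then $Q_\alpha\in\mathbb{J}_\alpha$, and for every sierpinskisation $S$ of $\alpha$ and $\omega$, $Q_\alpha$ is embeddable in $I_{<\omega}(S)$ by a map preserving finite joins.
   Context: A sierpinskisation of a countable order type $\beta$ and $\omega$ is a poset whose order is the intersection of two linear orders on its underlying set, one of type $\beta$ and one of type $\omega$; equivalently it is obtained from a bijection $\varphi:\mathbb{N}\to C$ onto a chain $C$ of type $\beta$ by setting $x\le y$ iff $x\le y$ in $\mathbb{N}$ and $\varphi(x)\le\varphi(y)$ in $C$. $\omega\alpha'$ is the ordered sum of $\alpha'$ copies of $\omega$, i.e. $\omega\times\alpha'$ ordered lexicographically with the $\alpha'$-coordinate dominant. A sierpinskisation of $\omega\alpha'$ and $\omega$ is monotonic if it comes from a bijection $\varphi:\mathbb{N}\to\omega\alpha'$ such that $\varphi^{-1}$ is order-preserving on each subset $\omega\times\{\beta\}$, $\beta\in\alpha'$; $\Omega(\alpha')$ denotes a monotonic sierpinskisation of $\omega\alpha'$ and $\omega$ (any two such embed in each other). $n$ denotes the $n$-element chain and $\oplus$ the direct sum (disjoint union, elements from different parts incomparable). $I_{<\omega}(S)$ is the set of finitely generated initial segments of $S$ ordered by inclusion. $\mathbb{J}_\alpha$ is the class of join-semilattices $P$ with a least element whose lattice $J(P)$ of ideals (non-empty up-directed initial segments, ordered by inclusion) contains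 a chain of type $I(\alpha)$, the type of the chain of all initial segments of a chain of type $\alpha$. A map preserves finite joins if $f(\bigvee X)=\bigvee f(X)$ for all finite $X$. *)

(* Defs.v *)
From mathcomp Require Import all_boot.
Set Implicit Arguments. Unset Strict Implicit. Unset Printing Implicit Defensive.

Definition partial_order {T : Type} (le : T -> T -> Prop) : Prop :=
  (forall x, le x x) /\
  (forall x y, le x y -> le y x -> x = y) /\
  (forall x y z, le x y -> le y z -> le x z).

Definition linear_order {T : Type} (le : T -> T -> Prop) : Prop :=
  partial_order le /\ (forall x y, le x y \/ le y x).

Definition order_iso {A C : Type} (leA : A -> A -> Prop) (leC : C -> C -> Prop)
  (h : A -> C) : Prop :=
  bijective h /\ (forall a a', leA a a' <-> leC (h a) (h a')).

Definition order_embedding {A C : Type} (leA : A -> A -> Prop) (leC : C -> C -> Prop)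
  (f : A -> C) : Prop :=
  forall a a', leA a a' <-> leC (f a) (f a').

Definition is_lub {T : Type} (le : T -> T -> Prop) (P : T -> Prop) (j : T) : Prop :=
  (forall x, P x -> le x j) /\ (forall u, (forall x, P x -> le x u) -> le j u).

(** [f] preserves finite joins: f (\/ X) = \/ f(X) for every finite X
    (X given as the range of a finite family, possibly empty). *)
Definition preserves_finite_joins {A C : Type} (leA : A -> A -> Prop)
  (leC : C -> C -> Prop) (f : A -> C) : Prop :=
  forall (k : nat) (g : 'I_k -> A) (j : A),
    is_lub leA (fun x => exists i, x = g i) j ->
    is_lub leC (fun y => exists i, y = f (g i)) (f j).

(** omega * B : lexicographic product, the B-coordinate dominant. *)
Definition lex_le {B : Type} (leB : B -> B -> Prop) (x y : nat * B) : Prop :=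
  (leB x.2 y.2 /\ x.2 <> y.2) \/ (x.2 = y.2 /\ (x.1 <= y.1)%N).

(** The ordered sum omega*B + n (every element of n above omega*B). *)
Definition osum_le {B : Type} (leB : B -> B -> Prop) (n : nat)
  (x y : (nat * B) + 'I_n) : Prop :=
  match x, y with
  | inl a, inl b => lex_le leB a b
  | inl _, inr _ => True
  | inr _, inl _ => False
  | inr i, inr j => (i <= j)%N
  end.
Arguments osum_le {B} leB n x y.

Definition dsum_le {X Y : Type} (leX : X -> X -> Prop) (leY : Y -> Y -> Prop)
  (u v : X + Y) : Prop :=
  match u, v with
  | inl a, inl b => leX a b
  | inr a, inr b => leY a b
  | _, _ => False
  end.

Definition nchain_le (n : nat) (i j : 'I_n) : Prop := (i <= j)%N.
Arguments nchain_le n i j : clear implicits.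

(** The sierpinskisation of (C, leC) and omega given by a bijection
    phi : N -> C: on N, x <= y iff x <= y in N and phi x <= phi y in C. *)
Definition sier_le {C : Type} (leC : C -> C -> Prop) (phi : nat -> C)
  (x y : nat) : Prop := (x <= y)%N /\ leC (phi x) (phi y).

(** phi : N -> omega*B is a bijection whose inverse is order preserving on
    each fibre omega x {beta}. *)
Definition monotonic_bij {B : Type} (phi : nat -> nat * B) : Prop :=
  bijective phi /\
  (forall x y, (phi x).2 = (phi y).2 -> ((phi x).1 <= (phi y).1)%N -> (x <= y)%N).

Definition Omega_le {B : Type} (leB : B -> B -> Prop) (phi : nat -> nat * B) :=
  sier_le (lex_le leB) phi.

Definition S_le {B : Type} (leB : B -> B -> Prop) (phi : nat -> nat * B) (n : nat) :
  nat + 'I_n -> nat + 'I_n -> Prop :=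
  dsum_le (Omega_le leB phi) (nchain_le n).
Arguments S_le {B} leB phi n _ _.

Definition fg_init {T : Type} (le : T -> T -> Prop) (X : T -> Prop) : Prop :=
  exists (k : nat) (g : 'I_k -> T), forall x, X x <-> exists i, le x (g i).

Definition Ifin {T : Type} (le : T -> T -> Prop) : Type :=
  {X : T -> Prop | fg_init le X}.

Definition Ifin_le {T : Type} (le : T -> T -> Prop) (X Y : Ifin le) : Prop :=
  forall x, sval X x -> sval Y x.
Arguments Ifin_le {T} le X Y.

Definition is_ideal {T : Type} (le : T -> T -> Prop) (I : T -> Prop) : Prop :=
  (exists x, I x) /\
  (forall x y, le x y -> I y -> I x) /\
  (forall x y, I x -> I y -> exists z, I z /\ le x z /\ le y z).

Definition is_initial {A : Type} (leA : A -> A -> Prop) (X : A -> Prop) : Prop :=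
  forall x y, leA x y -> X y -> X x.

Definition Iseg {A : Type} (leA : A -> A -> Prop) : Type :=
  {X : A -> Prop | is_initial leA X}.

Definition Iseg_le {A : Type} (leA : A -> A -> Prop) (X Y : Iseg leA) : Prop :=
  forall x, sval X x -> sval Y x.

(** The lattice J(P) of ideals of P contains a chain of type I(A):
    an order embedding of I(A) into (J(P), inclusion). *)
Definition J_contains_I {T A : Type} (le : T -> T -> Prop) (leA : A -> A -> Prop) : Prop :=
  exists g : Iseg leA -> (T -> Prop),
    (forall X, is_ideal le (g X)) /\
    (forall X Y, Iseg_le X Y <-> (forall t, g X t -> g Y t)).

Definition in_J {T A : Type} (le : T -> T -> Prop) (leA : A -> A -> Prop) : Prop :=
  partial_order le /\
  (forall x y, exists j, is_lub le (fun z => z = x \/ z = y) j) /\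
  (exists b, forall x, le b x) /\
  J_contains_I le leA.

(* Main.v *)
Require Import Defs.
From mathcomp Require Import all_boot.
From Stdlib Require Import FunctionalExtensionality PropExtensionality ProofIrrelevance IndefiniteDescription.

Set Implicit Arguments. Unset Strict Implicit. Unset Printing Implicit Defensive.

Lemma fg_of_fin (T : Type) (le : T -> T -> Prop) (X : T -> Prop) (F : finType)
  (g : F -> T) : (forall x, X x <-> exists i, le x (g i)) -> fg_init le X.
Proof.
move=> H; exists #|F|, (fun i => g (enum_val i)) => x; split.
  by move/H=> [i Hi]; exists (enum_rank i); rewrite enum_rankK.
by move=> [i Hi]; apply/H; exists (enum_val i).
Qed.

Lemma fg_union (T : Type) (le : T -> T -> Prop) (k : nat) (X : 'I_k -> T -> Prop) :
  (forall i, fg_init le (X i)) -> fg_init le (fun x => exists i, X i x).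
Proof.
move=> H.
pose K i := proj1_sig (constructive_indefinite_description _ (H i)).
have HG : forall i, exists g : 'I_(K i) -> T, forall x, X i x <-> exists j, le x (g j).
  move=> i; exact: (proj2_sig (constructive_indefinite_description _ (H i))).
pose G i := proj1_sig (constructive_indefinite_description _ (HG i)).
have HG' : forall i x, X i x <-> exists j, le x (G i j).
  move=> i; exact: (proj2_sig (constructive_indefinite_description _ (HG i))).
apply: (@fg_of_fin _ _ _ {: {i : 'I_k & 'I_(K i)}} (fun p => G (tag p) (tagged p))).
move=> x; split.
  by move=> [i /HG' [j Hj]]; exists (Tagged (fun i => 'I_(K i)) j).
by move=> [[i j] /= Hj]; exists i; apply/HG'; exists j.
Qed.

Lemma Ifin_ext (T : Type) (le : T -> T -> Prop) (X Y : Ifin le) :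
  Ifin_le le X Y -> Ifin_le le Y X -> X = Y.
Proof.
case: X Y => [X HX] [Y HY] /= H1 H2.
have E : X = Y.
  apply: functional_extensionality => x; apply: propositional_extensionality; split; [exact: H1|exact: H2].
subst Y; f_equal; apply: proof_irrelevance.
Qed.

Lemma fg_initial (T : Type) (le : T -> T -> Prop) (X : T -> Prop) :
  (forall x y z, le x y -> le y z -> le x z) ->
  fg_init le X -> forall x y, le x y -> X y -> X x.
Proof.
move=> tr [k [g Hg]] x y Hxy /Hg [i Hi]; apply/Hg; exists i; exact: tr Hxy Hi.
Qed.


Lemma lex_refl (B : Type) (leB : B -> B -> Prop) x : lex_le leB x x.
Proof. by right. Qed.

Lemma lex_trans (B : Type) (leB : B -> B -> Prop) : partial_order leB ->
  forall x y z, lex_le leB x y -> lex_le leB y z -> lex_le leB x z.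
Proof.
move=> [rf [an tr]] x y z [[H1 H2]|[H1 H2]] [[H3 H4]|[H3 H4]].
- left; split; first exact: tr H1 H3.
  by move=> E; apply: H2; apply: an => //; rewrite E.
- by left; rewrite -H3.
- by left; rewrite H1.
- by right; split; [rewrite H1|apply: leq_trans H4].
Qed.

Lemma sier_refl (C : Type) (leC : C -> C -> Prop) (phi : nat -> C) :
  (forall c, leC c c) -> forall x, sier_le leC phi x x.
Proof. by move=> rf x; split. Qed.

Lemma sier_trans (C : Type) (leC : C -> C -> Prop) (phi : nat -> C) :
  (forall x y z, leC x y -> leC y z -> leC x z) ->
  forall x y z, sier_le leC phi x y -> sier_le leC phi y z -> sier_le leC phi x z.
Proof.
move=> tr x y z [H1 H2] [H3 H4]; split; [exact: leq_trans H3|exact: tr H4].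
Qed.

Lemma S_refl (B : Type) (leB : B -> B -> Prop) phi n x : S_le leB phi n x x.
Proof. case: x => [a|i] /=; [by split => //; apply: lex_refl | exact: leqnn]. Qed.

Lemma S_trans (B : Type) (leB : B -> B -> Prop) phi n : partial_order leB ->
  forall x y z, S_le leB phi n x y -> S_le leB phi n y z -> S_le leB phi n x z.
Proof.
move=> po [a|i] [b|j] [c|l] //=.
- apply: sier_trans; exact: lex_trans.
- exact: leq_trans.
Qed.

Lemma Ifin_po (T : Type) (le : T -> T -> Prop) : partial_order (Ifin_le le).
Proof.
split; first by move=> X x.
split; first exact: Ifin_ext.
by move=> X Y Z H1 H2 x /H1 /H2.
Qed.

Lemma fg_union2 (T : Type) (le : T -> T -> Prop) (X Y : T -> Prop) :
  fg_init le X -> fg_init le Y -> fg_init le (fun x => X x \/ Y x).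
Proof.
move=> [k1 [g1 H1]] [k2 [g2 H2]].
apply: (@fg_of_fin _ _ _ {: ('I_k1 + 'I_k2)%type}
  (fun s => match s with inl i => g1 i | inr j => g2 j end)) => x; split.
- by case=> [/H1 [i Hi]|/H2 [i Hi]]; [exists (inl i)|exists (inr i)].
- by case=> [[i|i] Hi]; [left; apply/H1|right; apply/H2]; exists i.
Qed.

Lemma fg_empty (T : Type) (le : T -> T -> Prop) : fg_init le (fun _ => False).
Proof. by exists 0, (fun i : 'I_0 => match i with Ordinal _ p => False_rect _ (notF p) end) => x; split => // [[[]]]. Qed.

Lemma fg_princ (T : Type) (le : T -> T -> Prop) (s : T) : fg_init le (fun x => le x s).
Proof.
apply: (@fg_of_fin _ _ _ {: unit} (fun _ => s)) => x; split; first by exists tt.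
by case.
Qed.

Lemma Ifin_joins (T : Type) (le : T -> T -> Prop) (x y : Ifin le) :
  exists j, is_lub (Ifin_le le) (fun z => z = x \/ z = y) j.
Proof.
exists (exist _ _ (fg_union2 (proj2_sig x) (proj2_sig y))); split.
  by move=> z [->|->] t Ht /=; [left|right].
by move=> u Hu t [Ht|Ht]; [apply: (Hu x (or_introl erefl))|apply: (Hu y (or_intror erefl))].
Qed.

Lemma part1 (A B : Type) (leA : A -> A -> Prop) (leB : B -> B -> Prop) (n : nat)
  (hA : linear_order leA) (hB : linear_order leB)
  (hiso : exists h : A -> (nat * B) + 'I_n, order_iso leA (osum_le leB n) h)
  (phi : nat -> nat * B) (hphi : monotonic_bij phi) :
  in_J (Ifin_le (S_le leB phi n)) leA.
Proof.
have poB : partial_order leB by case: hB.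
have trS := @S_trans _ leB phi n poB.
split; first exact: Ifin_po.
split; first exact: Ifin_joins.
split.
  by exists (exist _ _ (fg_empty (S_le leB phi n))) => x t.
case: hiso => h [[hinv hK hKinv] hh].
case: hphi => [[phinv pK pKinv] _].
pose G (X : Iseg leA) (s : nat + 'I_n) : Prop :=
  match s with inl a => sval X (hinv (inl (phi a))) | inr i => sval X (hinv (inr i)) end.
exists (fun X (Y : Ifin (S_le leB phi n)) => forall s, sval Y s -> G X s); split.
  move=> X; split.
    by exists (exist _ _ (fg_empty (S_le leB phi n))).
  split; first by move=> Y Z HYZ HZ s /HYZ /HZ.
  move=> Y Z HY HZ; exists (exist _ _ (fg_union2 (proj2_sig Y) (proj2_sig Z))).
  split; first by move=> s [/HY|/HZ].
  by split => s Hs /=; [left|right].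
move=> X X'; split.
  move=> HX Y HY s /HY; case: s => [a|i] /=; exact: HX.
move=> H a Ha.
case Eh: (h a) => [[p b]|i].
- pose c := phinv (p, b).
  have Ec : phi c = (p, b) by rewrite /c pKinv.
  have := H (exist _ _ (fg_princ (S_le leB phi n) (inl c))).
  move=> /(_ _ (inl c)) /=.
  rewrite Ec -Eh hK; apply; last by split => //; apply: lex_refl.
  case=> [c'|j] //= [_ Hc']; case: X Ha {H} => X HX /= Ha.
  apply: HX Ha; apply/hh; rewrite Eh hKinv -Ec; exact: Hc'.
- have := H (exist _ _ (fg_princ (S_le leB phi n) (inr i))).
  move=> /(_ _ (inr i)) /=.
  rewrite -Eh hK; apply; last exact: leqnn.
  case=> [c'|j] //= Hj; case: X Ha {H} => X HX /= Ha.
  apply: HX Ha; apply/hh; rewrite Eh hKinv; exact: Hj.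
Qed.

Definition fst' {B : Type} {n : nat} (y : (nat * B) + 'I_n) : nat :=
  match y with inl p => p.1 | inr _ => 0 end.

Fixpoint Qf {B : Type} {n : nat} (t : nat -> (nat * B) + 'I_n) (K : nat) : nat :=
  match K with 0 => 0 | K'.+1 => maxn (Qf t K') (fst' (t K')).+1 end.

Fixpoint Kf {B : Type} {n : nat} (t : nat -> (nat * B) + 'I_n)
  (ti : (nat * B) + 'I_n -> nat) (phi : nat -> nat * B) (M a : nat) : nat :=
  match a with
  | 0 => M
  | a'.+1 => (maxn (Kf t ti phi M a') (ti (inl (Qf t (Kf t ti phi M a'), (phi a').2)))).+1
  end.

Definition ef {B : Type} {n : nat} (t : nat -> (nat * B) + 'I_n)
  (ti : (nat * B) + 'I_n -> nat) (phi : nat -> nat * B) (M a : nat) : nat :=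
  ti (inl (Qf t (Kf t ti phi M a), (phi a).2)).

Lemma Qf_mono B n (t : nat -> (nat * B) + 'I_n) K1 K2 : K1 <= K2 -> Qf t K1 <= Qf t K2.
Proof.
move=> /subnK <-; elim: (K2 - K1) => // d IH.
rewrite addSn /=; apply: leq_trans IH (leq_maxl _ _).
Qed.

Lemma Qf_gt B n (t : nat -> (nat * B) + 'I_n) x K : x < K -> fst' (t x) < Qf t K.
Proof.
elim: K => // K IH; rewrite ltnS leq_eqVlt => /orP [/eqP ->|/IH H] /=.
  exact: leq_maxr.
by apply: leq_trans H (leq_maxl _ _).
Qed.

Section E.
Variables (B : Type) (n : nat) (t : nat -> (nat * B) + 'I_n)
  (ti : (nat * B) + 'I_n -> nat) (tiK : cancel ti t) (phi : nat -> nat * B) (M : nat).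

Local Notation K := (Kf t ti phi M).
Local Notation e := (ef t ti phi M).

Lemma ef_t a : t (e a) = inl (Qf t (K a), (phi a).2).
Proof. by rewrite /ef tiK. Qed.

Lemma ef_ge a : K a <= e a.
Proof.
rewrite leqNgt; apply/negP => /(Qf_gt t); rewrite ef_t /=; by rewrite ltnn.
Qed.

Lemma Kf_S a : K a.+1 = (maxn (K a) (e a)).+1.
Proof. by []. Qed.

Lemma Kf_mono a b : a <= b -> K a <= K b.
Proof.
move=> /subnK <-; elim: (b - a) => // d IH.
rewrite addSn Kf_S; apply: leq_trans IH _; apply: leq_trans (leq_maxl _ (e _)) _; exact: leqnSn.
Qed.

Lemma ef_lt a b : a < b -> e a < e b.
Proof.
move=> Hab; apply: leq_trans (ef_ge b).
apply: leq_trans (Kf_mono Hab); rewrite Kf_S ltnS; exact: leq_maxr.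
Qed.

Lemma ef_M a : M <= e a.
Proof. apply: leq_trans (ef_ge a); exact: (Kf_mono (leq0n a)). Qed.

End E.

Definition tle {B : Type} (leB : B -> B -> Prop) (n : nat) (t : nat -> (nat * B) + 'I_n)
  (x y : nat) : Prop := (x <= y)%N /\ osum_le leB n (t x) (t y).

Lemma ef_emb B (leB : B -> B -> Prop) n (t : nat -> (nat * B) + 'I_n) ti (tiK : cancel ti t)
  phi (hphi : monotonic_bij phi) M a b :
  Omega_le leB phi a b <-> tle leB t (ef t ti phi M a) (ef t ti phi M b).
Proof.
case: hphi => _ hmon.
rewrite /Omega_le /sier_le /tle !(ef_t tiK) /=; split.
  move=> [Hab Hl]; split.
    move: Hab; rewrite leq_eqVlt => /orP [/eqP ->|H]; first exact: leqnn.
    exact: ltnW (ef_lt tiK phi M H).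
  case: Hl => [[H1 H2]|[H1 H2]]; [by left|right; split => //=].
  apply: Qf_mono; exact: Kf_mono.
move=> [He Ho].
have Hab : a <= b.
  rewrite leqNgt; apply/negP => /(ef_lt tiK phi M) H.
  by move: (leq_trans H He); rewrite ltnn.
split => //; case: Ho => [[H1 H2]|[H1 H2]]; [by left|right; split => //].
case: (leqP (phi a).1 (phi b).1) => // Hlt.
have Hba : b <= a by apply: hmon; [simpl in H1; rewrite H1|exact: ltnW].
have Eab : a = b by apply/eqP; rewrite eqn_leq Hab Hba.
by move: Hlt; rewrite Eab ltnn.
Qed.

Lemma osum_trans B (leB : B -> B -> Prop) n : partial_order leB ->
  forall x y z, osum_le leB n x y -> osum_le leB n y z -> osum_le leB n x z.
Proof.
move=> po [a|i] [b|j] [c|l] //=; [exact: lex_trans|exact: leq_trans].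
Qed.

Lemma osum_refl B (leB : B -> B -> Prop) n x : osum_le leB n x x.
Proof. case: x => [a|i] /=; [exact: lex_refl|exact: leqnn]. Qed.

Definition gf {n : nat} (e : nat -> nat) (m : 'I_n -> nat) (s : nat + 'I_n)
  (o : option 'I_n) : nat :=
  match s with
  | inl a => e a
  | inr i => match o with None => m i | Some j => if (j <= i)%N then m j else m i end
  end.

Lemma part2 B (leB : B -> B -> Prop) n (hB : linear_order leB) phi (hphi : monotonic_bij phi)
  (t : nat -> (nat * B) + 'I_n) ti (tK : cancel t ti) (tiK : cancel ti t) :
  exists f : Ifin (S_le leB phi n) -> Ifin (tle leB t),
    order_embedding (Ifin_le (S_le leB phi n)) (Ifin_le (tle leB t)) f /\
    preserves_finite_joins (Ifin_le (S_le leB phi n)) (Ifin_le (tle leB t)) f.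
Proof.
have poB : partial_order leB by case: hB.
have trS := @S_trans _ leB phi n poB.
have rfT : forall x, tle leB t x x by move=> x; split; [exact: leqnn|exact: osum_refl].
have trT : forall x y z, tle leB t x y -> tle leB t y z -> tle leB t x z.
  move=> x y z [H1 H2] [H3 H4]; split; [exact: leq_trans H3|exact: osum_trans H4].
pose m i := ti (inr i).
pose M := (\max_(i < n) m i).+1.
have HM : forall i, m i < M by move=> i; rewrite /M ltnS; exact: (@leq_bigmax _ m i).
pose e := ef t ti phi M.
pose g := gf e m.
have hgr : forall (j : 'I_n) o', exists2 k : 'I_n, k <= j & g (inr j) o' = m k.
  move=> j [j'|] /=; last by exists j.
  by case Hj: (j' <= j); [exists j'|exists j].
have mono : forall s s', S_le leB phi n s s' -> forall o, exists o', tle leB t (g s o) (g s' o').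
  case=> [a|i] [b|j] Hs o; [|by case: Hs|by case: Hs|].
  - by exists None; exact: (ef_emb leB tiK hphi M a b).1 Hs.
  - have [k Hk ->] := hgr i o; exists (Some k) => /=.
    by rewrite (leq_trans Hk Hs); apply: rfT.
have key : forall s s' o', tle leB t (g s None) (g s' o') -> S_le leB phi n s s'.
  case=> [a|i] [b|j] o'.
  - exact: (ef_emb leB tiK hphi M a b).2.
  - have [k _ ->] := hgr j o'; move=> [H _].
    have := leq_trans (ef_M tiK phi M a) H; rewrite leqNgt HM //.
  - by move=> [_]; rewrite /m tiK (ef_t tiK).
  - have [k Hk ->] := hgr j o'; move=> [_]; rewrite /m !tiK /= => H.
    exact: leq_trans H Hk.
have fY : forall Y : Ifin (S_le leB phi n),
    fg_init (tle leB t) (fun x => exists s o, sval Y s /\ tle leB t x (g s o)).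
  case=> Y [k [gY HY]] /=.
  apply: (@fg_of_fin _ _ _ {: ('I_k * option 'I_n)%type} (fun p => g (gY p.1) p.2)) => x; split.
  - move=> [s [o [/HY [i Hi] Hx]]]; have [o' Ho'] := mono _ _ Hi o.
    by exists (i, o'); exact: trT Hx Ho'.
  - move=> [[i o] Hx]; exists (gY i), o; split => //; apply/HY; exists i; exact: S_refl.
pose f Y := (exist _ _ (fY Y) : Ifin (tle leB t)).
have fmono : forall Y Z, Ifin_le (S_le leB phi n) Y Z -> Ifin_le (tle leB t) (f Y) (f Z).
  by move=> Y Z H x [s [o [Hs Hx]]]; exists s, o; split => //; exact: H.
have initial : forall (Z : Ifin (S_le leB phi n)) s s',
    S_le leB phi n s s' -> sval Z s' -> sval Z s.
  move=> Z; exact: (fg_initial trS (proj2_sig Z)).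
exists f; split.
  move=> Y Z; split; first exact: fmono.
  move=> H s Hs.
  have : sval (f Y) (g s None) by exists s, None; split => //; apply: rfT.
  move/H => [s' [o' [Hs' Hx]]].
  exact: initial Z _ _ (key _ _ _ Hx) Hs'.
move=> k gY j [Hub Hleast]; split.
  by move=> y [i ->]; apply: fmono; apply: Hub; exists i.
move=> u Hu.
have HU := @fg_union _ _ k (fun i => sval (gY i)) (fun i => proj2_sig (gY i)).
pose U := (exist _ _ HU : Ifin (S_le leB phi n)).
have jU : Ifin_le (S_le leB phi n) j U.
  by apply: Hleast => x [i ->] s Hs; exists i.
move=> x [s [o [Hs Hx]]]; have [i Hi] := jU s Hs.
apply: (Hu (f (gY i))); first by exists i.
by exists s, o.
Qed.

Theorem lemma2p8 (A B : Type) (leA : A -> A -> Prop) (leB : B -> B -> Prop) (n : nat)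
  (hA : linear_order leA) (hB : linear_order leB)
  (hcount : exists e : nat -> A, bijective e)
  (hiso : exists h : A -> (nat * B) + 'I_n, order_iso leA (osum_le leB n) h)
  (phi : nat -> nat * B) (hphi : monotonic_bij phi) :
  in_J (Ifin_le (S_le leB phi n)) leA /\
  (forall psi : nat -> A, bijective psi ->
     exists f : Ifin (S_le leB phi n) -> Ifin (sier_le leA psi),
       order_embedding (Ifin_le (S_le leB phi n)) (Ifin_le (sier_le leA psi)) f /\
       preserves_finite_joins (Ifin_le (S_le leB phi n)) (Ifin_le (sier_le leA psi)) f).
Proof.
split; first exact: part1.
move=> psi [psinv pK pKi].
case: hiso => h [[hinv hK hKi] hh].
have E : sier_le leA psi = tle leB (fun x => h (psi x)).
  apply: functional_extensionality => x; apply: functional_extensionality => y.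
  apply: propositional_extensionality; rewrite /sier_le /tle; split.
    by move=> [H1 H2]; split => //; apply/hh.
  by move=> [H1 H2]; split => //; apply/hh.
rewrite E.
apply: (@part2 _ _ _ hB _ hphi _ (fun y => psinv (hinv y))).
- by move=> x; rewrite hK pK.
- by move=> y; rewrite pKi hKi.
Qed.
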